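(* Let $p(x)=\sum_{k=2}^m a_kx^k$ be a real polynomial of degree $m$ (so $p(0)=p'(0)=0$), convex on an interval $[0,A]$, and suppose $p(A)>1$. Then $p(x)=1$ has a unique solution $\mu$ in $[0,A]$, and $$\mu\approx\left[\sum_{k=2}^m|a_k|^{1/k}\right]^{-1},$$ where the implied constants depend only on $m$.
   Context: $X\approx Y$ means $cY\le X\le c^{-1}Y$ for some $c>0$ depending only on $m$ (not on $A$ or the coefficients). *)

(* Defs.v *)
From HB Require Import structures.
From mathcomp Require Import all_boot all_order all_algebra.
From mathcomp Require Import all_classical all_reals all_analysis.
Set Implicit Arguments. Unset Strict Implicit. Unset Printing Implicit Defensive.
Import Order.TTheory GRing.Theory Num.Theory.
Local Open Scope ring_scope.

Definition convex_on_interval (R : realType) (a b : R) (f : R -> R) : Prop :=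
  forall x y t : R, a <= x <= b -> a <= y <= b -> 0 <= t <= 1 ->
    f (t * x + (1 - t) * y) <= t * f x + (1 - t) * f y.

Definition coef_root_sum (R : realType) (m : nat) (p : {poly R}) : R :=
  \sum_(2 <= k < m.+1) powR `|p`_k| (k%:R^-1).

(* Main.v *)
Require Import Defs.
From HB Require Import structures.
From mathcomp Require Import all_boot all_order all_algebra.
From mathcomp Require Import all_classical all_reals all_analysis.
From mathcomp Require Import ring lra.
Import Order.TTheory GRing.Theory Num.Theory.
Local Open Scope ring_scope.

Lemma powR_root (R : realType) (x : R) (k : nat) : 0 <= x -> (0 < k)%N ->
  (x `^ (k%:R^-1)) ^+ k = x.
Proof.
move=> x0 k0; rewrite -powR_mulrn ?powR_ge0 // -powRrM mulVf ?powRr1 //.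
by rewrite pnatr_eq0 -lt0n.
Qed.

Lemma powR_le_root (R : realType) (x y : R) (k : nat) : 0 <= x -> 0 <= y ->
  (0 < k)%N -> x <= y ^+ k -> x `^ (k%:R^-1) <= y.
Proof.
move=> x0 y0 k0 xy.
have -> : y = (y ^+ k) `^ (k%:R^-1).
  by rewrite -powR_mulrn // -powRrM mulfV ?powRr1 // pnatr_eq0 -lt0n.
by apply: ge0_ler_powR; rewrite ?nnegrE ?invr_ge0 ?ler0n ?exprn_ge0.
Qed.

Lemma coef_bound (R : realType) (m : nat) : (0 < m)%N ->
  exists C : R, 1 <= C /\ forall a : nat -> R,
    (forall j, (j <= m)%N -> `|\sum_(k < m.+1) a k * (j%:R / m%:R) ^+ k| <= 1) ->
    forall k, (k <= m)%N -> `|a k| <= C.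
Proof.
move=> m0.
pose t : 'rV[R]_(m.+1) := \row_(j < m.+1) (j%:R / m%:R).
pose V := Vandermonde m.+1 t.
have Vu : V \in unitmx.
  rewrite unitmxE unitfE det_Vandermonde; apply/prodf_neq0 => i _.
  apply/prodf_neq0 => j ij; rewrite !mxE subr_eq0 gt_eqF //.
  by rewrite ltr_pM2r ?invr_gt0 ?ltr0n // ltr_nat.
pose W := invmx V.
exists (1 + \sum_(j < m.+1) \sum_(k < m.+1) `|W j k|); split.
  by rewrite lerDl sumr_ge0 // => j _; rewrite sumr_ge0.
move=> a ha k km.
pose av : 'rV[R]_(m.+1) := \row_(k < m.+1) a k.
have ak : a k = (av *m V *m W) 0 (Ordinal (km : (k < m.+1)%N)).
  by rewrite /W mulmxK // mxE.
rewrite ak mxE.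
apply: le_trans (ler_norm_sum _ _ _) _.
apply: ler_wpDl => //.
apply: ler_sum => j _.
apply: (@le_trans _ _ `|W j (Ordinal (km : (k < m.+1)%N))|).
  rewrite normrM ler_piMl //.
  rewrite mxE; apply: le_trans (ha j _); last by rewrite -ltnS.
  rewrite le_eqVlt; apply/orP; left; apply/eqP; congr `|_|.
  by apply: eq_bigr => i _; rewrite !mxE.
rewrite (bigD1 (Ordinal (km : (k < m.+1)%N))) //= lerDl.
by rewrite sumr_ge0.
Qed.

Lemma quad_lb (R : realType) (p : {poly R}) (t x : R) :
  p`_0 = 0 -> p`_1 = 0 -> 0 <= t <= 1 -> 0 <= x ->
  - (t ^+ 2 * \sum_(i < size p) `|p`_i| * x ^+ i) <= p.[t * x].
Proof.
move=> h0 h1 /andP[t0 t1] x0.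
rewrite horner_coef mulr_sumr -sumrN; apply: ler_sum => -[[|[|i]] /= _ _].
- by rewrite h0 normr0 !mul0r mulr0 oppr0.
- by rewrite h1 normr0 !mul0r mulr0 oppr0.
apply: lerNnormlW; rewrite normrM normrX (ger0_norm (mulr_ge0 t0 x0)) exprMn.
rewrite mulrCA; apply: ler_wpM2r; first by rewrite mulr_ge0 ?exprn_ge0.
have -> : (i.+2 = i + 2)%N by rewrite addn2.
by rewrite exprD -[leRHS]mul1r ler_wpM2r ?exprn_ge0 // exprn_ile1.
Qed.

Lemma poly_nonneg (R : realType) (p : {poly R}) (A x : R) :
  p`_0 = 0 -> p`_1 = 0 -> convex_on_interval 0 A (fun x => p.[x]) ->
  0 <= x <= A -> 0 <= p.[x].
Proof.
move=> h0 h1 hc /andP[x0 xA].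
have p0 : p.[0] = 0 by rewrite horner_coef0.
have [->|xn0] := eqVneq x 0; first by rewrite p0.
have xpos : 0 < x by rewrite lt_def xn0.
rewrite leNgt; apply/negP => px.
set K := \sum_(i < size p) `|p`_i| * x ^+ i.
have K0 : 0 <= K by rewrite sumr_ge0 // => i _; rewrite mulr_ge0 ?exprn_ge0.
set q := - p.[x].
have q0 : 0 < q by rewrite oppr_gt0.
set t := q / (K + q).
have Kq : 0 < K + q by rewrite ltr_wpDl.
have tK : t * (K + q) = q by rewrite /t divfK // gt_eqF.
have t0 : 0 < t by rewrite divr_gt0.
have t1 : t <= 1 by rewrite ler_pdivrMr // mul1r lerDr.
have A0 : 0 <= A := le_trans x0 xA.
have := hc x 0 t; rewrite lexx xA x0 A0 (ltW t0) t1 /= => /(_ isT isT isT).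
rewrite mulr0 addr0 p0 mulr0 addr0 => hcx.
have := @quad_lb _ p t x h0 h1; rewrite (ltW t0) t1 => /(_ isT x0).
rewrite -/K => hq.
have : - (t ^+ 2 * K) <= t * p.[x] := le_trans hq hcx.
rewrite -[p.[x]]opprK -/q.
clearbody t q K.
have e : t ^+ 2 * K = t * q - t ^+ 2 * q.
  by rewrite -{1}tK; ring.
have tq : 0 < t ^+ 2 * q by rewrite mulr_gt0 ?exprn_gt0.
rewrite e; lra.
Qed.

Lemma poly_mono (R : realType) (p : {poly R}) (A x y : R) :
  p`_0 = 0 -> convex_on_interval 0 A (fun x => p.[x]) ->
  0 <= x -> x <= y -> y <= A -> 0 < y -> p.[x] <= (x / y) * p.[y].
Proof.
move=> h0 hc x0 xy yA y0.
have p0 : p.[0] = 0 by rewrite horner_coef0.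
have A0 : 0 <= A := le_trans (ltW y0) yA.
have := hc y 0 (x / y); rewrite (ltW y0) A0 yA lexx divr_ge0 ?(ltW y0) //=.
rewrite ler_pdivrMr // mul1r xy => /(_ isT isT isT).
by rewrite mulr0 addr0 p0 mulr0 addr0 divfK // gt_eqF.
Qed.

Lemma term_le_sum (R : realType) (a b k : nat) (F : nat -> R) :
  (forall i, 0 <= F i) -> (a <= k < b)%N -> F k <= \sum_(a <= i < b) F i.
Proof.
move=> F0 kab.
rewrite (bigD1_seq k) ?mem_index_iota ?iota_uniq //= lerDl.
by rewrite sumr_ge0.
Qed.

Theorem proposition4p6 (R : realType) (m : nat) (hm : (2 <= m)%N) :
  exists c : R, 0 < c /\
  forall (A : R) (p : {poly R}),
    size p = m.+1 -> p`_0 = 0 -> p`_1 = 0 -> 0 < A ->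
    convex_on_interval 0 A (fun x => p.[x]) -> 1 < p.[A] ->
    exists mu : R,
      [/\ 0 <= mu <= A, p.[mu] = 1,
          (forall x : R, 0 <= x <= A -> p.[x] = 1 -> x = mu) &
          c * (coef_root_sum m p)^-1 <= mu <= c^-1 * (coef_root_sum m p)^-1].
Proof.
have m0 : (0 < m)%N by apply: leq_trans hm.
have [C [C1 hC]] := @coef_bound R m m0.
have C0 : 0 < C by apply: lt_le_trans ltr01 C1.
have mC : 1 <= m%:R * C.
  by apply: le_trans C1 _; apply: ler_peMl; rewrite ?(ltW C0) // ler1n.
have mC0 : 0 < m%:R * C by apply: lt_le_trans ltr01 mC.
exists ((m%:R * C)^-1); split; first by rewrite invr_gt0.
move=> A p hs h0 h1 A0 hc hpA.
have p0 : p.[0] = 0 by rewrite horner_coef0.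
have [mu muI pmu] : exists2 mu, mu \in `[0, A] & p.[mu] = 1.
  apply: IVT; first exact: ltW.
  - apply: (@continuous_subspaceT _ _ `[0,A]%classic (horner p)).
    exact: continuous_horner.
  - by rewrite p0 ge_min le_max ler01 (ltW hpA) orbT.
move: muI; rewrite in_itv /= => /andP[mu0 muA].
have mupos : 0 < mu.
  rewrite lt_def mu0 andbT; apply/eqP => e.
  by move: pmu; rewrite e p0 => /esym/eqP; rewrite oner_eq0.
have uniq : forall x, 0 <= x <= A -> p.[x] = 1 -> x = mu.
  move=> x /andP[x0 xA] px.
  case: (ltgtP x mu) => // [xlt|xgt].
  - have := @poly_mono R p A x mu h0 hc x0 (ltW xlt) muA mupos.
    rewrite px pmu mulr1 ler_pdivlMr // mul1r => h.
    by move: xlt; rewrite ltNge h.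
  - have xpos : 0 < x by apply: lt_trans mupos xgt.
    have := @poly_mono R p A mu x h0 hc mu0 (ltW xgt) xA xpos.
    rewrite px pmu mulr1 ler_pdivlMr // mul1r => h.
    by move: xgt; rewrite ltNge h.
set S := coef_root_sum m p.
have hsum : 1 = \sum_(2 <= k < m.+1) p`_k * mu ^+ k.
  rewrite -pmu horner_coef hs -(big_mkord xpredT (fun k => p`_k * mu ^+ k)).
  by rewrite big_ltn // big_ltn // h0 h1 !mul0r !add0r.
have hy : forall (y : R) n, 0 <= y -> y <= 1 -> (0 < n)%N -> y ^+ n <= y.
  by move=> y [|n] // y0 y1 _; rewrite exprS ler_piMr // exprn_ile1.
have lower : 1 <= mu * S.
  rewrite leNgt; apply/negP => lt1.
  have : \sum_(2 <= k < m.+1) p`_k * mu ^+ k <= mu * S.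
    rewrite /S /coef_root_sum mulr_sumr; apply: ler_sum_nat => k /andP[k2 km].
    have k0 : (0 < k)%N by apply: leq_trans k2.
    set b := `|p`_k| `^ (k%:R^-1).
    have b0 : 0 <= b by apply: powR_ge0.
    have bm0 : 0 <= mu * b by rewrite mulr_ge0.
    have bm1 : mu * b <= 1.
      apply: ltW; apply: le_lt_trans lt1; rewrite /S /coef_root_sum mulr_sumr.
      apply: (@term_le_sum R 2 m.+1 k (fun i => mu * `|p`_i| `^ (i%:R^-1))).
        by move=> i; rewrite mulr_ge0 ?powR_ge0.
      by rewrite k2 km.
    apply: le_trans (_ : `|p`_k| * mu ^+ k <= _).
      by rewrite ler_wpM2r ?exprn_ge0 ?ler_norm.
    rewrite -(@powR_root R `|p`_k| k) // -/b -exprMn [b * mu]mulrC.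
    exact: hy.
  by rewrite -hsum => /(lt_le_trans lt1); rewrite ltxx.
have S0 : 0 < S by nra.
have hb : forall k, (k <= m)%N -> `|p`_k * mu ^+ k| <= C.
  apply: hC => j jm.
  have -> : \sum_(k < m.+1) p`_k * mu ^+ k * (j%:R / m%:R) ^+ k
      = p.[mu * (j%:R / m%:R)].
    by rewrite horner_coef hs; apply: eq_bigr => k _; rewrite [in RHS]exprMn mulrA.
  set x := mu * _.
  have x0 : 0 <= x by rewrite mulr_ge0 ?divr_ge0 ?ler0n ?(ltW mupos).
  have xmu : x <= mu.
    rewrite /x -[leRHS]mulr1 ler_wpM2l ?(ltW mupos) //.
    by rewrite ler_pdivrMr ?ltr0n // mul1r ler_nat.
  rewrite ger0_norm; last first.
    by apply: (@poly_nonneg R p A x h0 h1 hc); rewrite x0 (le_trans xmu muA).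
  apply: le_trans (@poly_mono R p A x mu h0 hc x0 xmu muA mupos) _.
  by rewrite pmu mulr1 ler_pdivrMr // mul1r.
have upper : mu * S <= m%:R * C.
  apply: (@le_trans _ _ (mu * ((C / mu) *+ (m.+1 - 2)))).
    rewrite ler_wpM2l ?(ltW mupos) // /S /coef_root_sum -sumr_const_nat.
    apply: ler_sum_nat => k /andP[k2 km].
    have k0 : (0 < k)%N by apply: leq_trans k2.
    apply: powR_le_root => //; first by rewrite divr_ge0 ?(ltW C0) ?(ltW mupos).
    have := hb k (km : (k <= m)%N).
    rewrite normrM normrX (ger0_norm (ltW mupos)) -ler_pdivlMr ?exprn_gt0 //.
    move/le_trans; apply; rewrite expr_div_n ler_wpM2r ?invr_ge0 ?exprn_ge0 ?(ltW mupos) //.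
    case: k k0 {k2 km} => // k _.
    by rewrite exprS ler_peMr ?(ltW C0) ?exprn_ege1.
  rewrite mulrnAr mulrCA divff ?gt_eqF // mulr1 -mulr_natl.
  by rewrite ler_wpM2r ?(ltW C0) // ler_nat subSS leq_subr.
exists mu; split => //; first by rewrite mu0 muA.
apply/andP; split.
  rewrite ler_pdivrMr //; apply: le_trans lower.
  by rewrite invf_le1.
by rewrite ler_pdivlMr // invrK.
Qed.
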